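(* Let $\Omega=(\lambda x.x\,x)(\lambda x.x\,x)$. Then $\Omega\approx^p_{\emptyset}\mathcal Sk.\Omega$.
   Context: Terms of $\lambda_S$: $t ::= x \mid \lambda x.t \mid t\,t \mid \mathcal{S}k.t \mid \langle t\rangle$ (shift binds $k$; $\langle\cdot\rangle$ reset), up to $\alpha$-conversion. Values $v::=\lambda x.t$. Pure contexts $E ::= \Box \mid v\,E \mid E\,t$; evaluation contexts $F ::= \Box \mid v\,F \mid F\,t \mid \langle F\rangle$. Reduction: $F[(\lambda x.t)v]\to F[t\{v/x\}]$; $F[\langle E[\mathcal Sk.t]\rangle]\to F[\langle t\{\lambda x.\langle E[x]\rangle/k\}\rangle]$ ($x\notin\mathrm{fv}(E)$); $F[\langle v\rangle]\to F[v]$; $\to^*$ reflexive-transitive closure. Program: term $\langle t\rangle$ (ranged over by $p$). Closures: for $R$ a relation on closed terms, $\widetilde R$ is the smallest relation containing $R$, all $(x,x)$, closed under all term constructors, restricted to closed terms; $\widehat R$ is the smallest relation on closed evaluation contexts with $\Box\widehat R\Box$, $v_0F_0\widehat Rv_1F_1$ if $F_0\widehat RF_1,v_0\widetilde Rv_1$; $F_0t_0\widehat RF_1t_1$ if $F_0\widehat RF_1,t_0\widetilde Rt_1$; $\langle F_0\rangle\widehat R\langle F_1\rangle$ if $F_0\widehat RF_1$. Environmental bisimilarity for programs: an environment $\mathcal E$ is a relation on closed values; an environmental relation $\mathcal X$ is a set of environments and triples $(\mathcal E,t_0,t_1)$, $t_0,t_1$ closed, written $t_0\mathcal X_{\mathcal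 E}t_1$. $\mathcal X$ is an environmental bisimulation for programs if (1) if $t_0\mathcal X_{\mathcal E}t_1$ and $t_0,t_1$ are not both programs, then for all pure $E_0\widehat{\mathcal E}E_1$, $\langle E_0[t_0]\rangle\mathcal X_{\mathcal E}\langle E_1[t_1]\rangle$; (2) if $p_0\mathcal X_{\mathcal E}p_1$: (a) $p_0\to p_0'$ (program) implies $p_1\to^*p_1'$ (program) with $p_0'\mathcal X_{\mathcal E}p_1'$; (b) $p_0\to v_0$ implies $p_1\to^*v_1$ and $\{(v_0,v_1)\}\cup\mathcal E\in\mathcal X$; (c) symmetric conditions; (3) for $\mathcal E\in\mathcal X$, $(\lambda x.t_0)\mathcal E(\lambda x.t_1)$ and $v_0\widetilde{\mathcal E}v_1$ imply $t_0\{v_0/x\}\mathcal X_{\mathcal E}t_1\{v_1/x\}$. $\approx^p$ is the largest such relation; $t_0\approx^p_{\emptyset}t_1$ means $(\emptyset,t_0,t_1)\in\approx^p$. *)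

(* Defs.v *)
From Stdlib Require Import Arith Relations.

Inductive term : Type :=
| Var : nat -> term
| Lam : term -> term
| App : term -> term -> term
| Shift : term -> term          (* S k. t, k is index 0 in body *)
| Reset : term -> term.

Definition is_value (t : term) : Prop :=
  match t with Lam _ => True | _ => False end.

Definition is_program (t : term) : Prop :=
  match t with Reset _ => True | _ => False end.

Fixpoint closed_at (n : nat) (t : term) : Prop :=
  match t with
  | Var m => m < n
  | Lam b => closed_at (S n) b
  | App a b => closed_at n a /\ closed_at n b
  | Shift b => closed_at (S n) b
  | Reset b => closed_at n b
  end.

Definition closed (t : term) : Prop := closed_at 0 t.

Fixpoint lift (c : nat) (t : term) : term :=
  match t with
  | Var n => if n <? c then Var n else Var (S n)
  | Lam b => Lam (lift (S c) b)
  | App a b => App (lift c a) (lift c b)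
  | Shift b => Shift (lift (S c) b)
  | Reset b => Reset (lift c b)
  end.

Fixpoint liftn (k : nat) (t : term) : term :=
  match k with 0 => t | S k' => lift 0 (liftn k' t) end.

(* subst k u t = t{u/k}, decrementing the indices above k *)
Fixpoint subst (k : nat) (u : term) (t : term) : term :=
  match t with
  | Var n => if n <? k then Var n
             else if n =? k then liftn k u
             else Var (pred n)
  | Lam b => Lam (subst (S k) u b)
  | App a b => App (subst k u a) (subst k u b)
  | Shift b => Shift (subst (S k) u b)
  | Reset b => Reset (subst k u b)
  end.

(* pure contexts E ::= [] | v E | E t   (v = Lam b) *)
Inductive ectx : Type :=
| EHole : ectx
| EArg : term -> ectx -> ectx     (* EArg b E  =  (Lam b) E *)
| EFun : ectx -> term -> ectx.

(* evaluation contexts F ::= [] | v F | F t | <F> *)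
Inductive fctx : Type :=
| FHole : fctx
| FArg : term -> fctx -> fctx     (* FArg b F  =  (Lam b) F *)
| FFun : fctx -> term -> fctx
| FReset : fctx -> fctx.

Fixpoint plugE (E : ectx) (t : term) : term :=
  match E with
  | EHole => t
  | EArg b E' => App (Lam b) (plugE E' t)
  | EFun E' u => App (plugE E' t) u
  end.

Fixpoint plugF (F : fctx) (t : term) : term :=
  match F with
  | FHole => t
  | FArg b F' => App (Lam b) (plugF F' t)
  | FFun F' u => App (plugF F' t) u
  | FReset F' => Reset (plugF F' t)
  end.

Fixpoint liftE (c : nat) (E : ectx) : ectx :=
  match E with
  | EHole => EHole
  | EArg b E' => EArg (lift (S c) b) (liftE c E')
  | EFun E' u => EFun (liftE c E') (lift c u)
  end.

Fixpoint embed (E : ectx) : fctx :=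
  match E with
  | EHole => FHole
  | EArg b E' => FArg b (embed E')
  | EFun E' u => FFun (embed E') u
  end.

Definition cont (E : ectx) : term := Lam (Reset (plugE (liftE 0 E) (Var 0))).

Inductive step : term -> term -> Prop :=
| st_beta : forall F b v, is_value v ->
    step (plugF F (App (Lam b) v)) (plugF F (subst 0 v b))
| st_shift : forall F E t,
    step (plugF F (Reset (plugE E (Shift t))))
         (plugF F (Reset (subst 0 (cont E) t)))
| st_reset : forall F v, is_value v ->
    step (plugF F (Reset v)) (plugF F v).

Definition steps : term -> term -> Prop := clos_refl_trans term step.

Definition rel := term -> term -> Prop.

Inductive tctx (R : rel) : term -> term -> Prop :=
| tc_base : forall a b, R a b -> tctx R a b
| tc_var : forall n, tctx R (Var n) (Var n)
| tc_lam : forall a b, tctx R a b -> tctx R (Lam a) (Lam b)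
| tc_app : forall a a' b b', tctx R a b -> tctx R a' b' ->
    tctx R (App a a') (App b b')
| tc_shift : forall a b, tctx R a b -> tctx R (Shift a) (Shift b)
| tc_reset : forall a b, tctx R a b -> tctx R (Reset a) (Reset b).

Definition tilde (R : rel) (a b : term) : Prop :=
  tctx R a b /\ closed a /\ closed b.

Inductive hat (R : rel) : fctx -> fctx -> Prop :=
| hat_hole : hat R FHole FHole
| hat_arg : forall b0 b1 F0 F1, hat R F0 F1 -> tilde R (Lam b0) (Lam b1) ->
    hat R (FArg b0 F0) (FArg b1 F1)
| hat_fun : forall F0 F1 t0 t1, hat R F0 F1 -> tilde R t0 t1 ->
    hat R (FFun F0 t0) (FFun F1 t1)
| hat_reset : forall F0 F1, hat R F0 F1 -> hat R (FReset F0) (FReset F1).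

(* an environment is a relation on closed values *)
Definition env := rel.

Definition env_ok (E : env) : Prop :=
  forall a b, E a b -> is_value a /\ closed a /\ is_value b /\ closed b.

Definition env_empty : env := fun _ _ => False.

Definition env_add (v0 v1 : term) (E : env) : env :=
  fun a b => (a = v0 /\ b = v1) \/ E a b.

Record envrel : Type := {
  X_env : env -> Prop;
  X_tri : env -> term -> term -> Prop
}.

Definition is_bisim_p (X : envrel) : Prop :=
  (forall E, X_env X E -> env_ok E) /\
  (forall E t0 t1, X_tri X E t0 t1 -> env_ok E /\ closed t0 /\ closed t1) /\
  (* (1) *)
  (forall E t0 t1, X_tri X E t0 t1 -> ~ (is_program t0 /\ is_program t1) ->
     forall E0 E1, hat E (embed E0) (embed E1) ->
       X_tri X E (Reset (plugE E0 t0)) (Reset (plugE E1 t1))) /\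
  (* (2) *)
  (forall E p0 p1, X_tri X E p0 p1 -> is_program p0 -> is_program p1 ->
     (* (a) *)
     (forall p0', step p0 p0' -> is_program p0' ->
        exists p1', steps p1 p1' /\ is_program p1' /\ X_tri X E p0' p1') /\
     (* (b) *)
     (forall v0, step p0 v0 -> is_value v0 ->
        exists v1, steps p1 v1 /\ is_value v1 /\ X_env X (env_add v0 v1 E)) /\
     (* (c) symmetric *)
     (forall p1', step p1 p1' -> is_program p1' ->
        exists p0', steps p0 p0' /\ is_program p0' /\ X_tri X E p0' p1') /\
     (forall v1, step p1 v1 -> is_value v1 ->
        exists v0, steps p0 v0 /\ is_value v0 /\ X_env X (env_add v0 v1 E))) /\
  (* (3) *)
  (forall E, X_env X E ->
     forall b0 b1 v0 v1, E (Lam b0) (Lam b1) ->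
       is_value v0 -> is_value v1 -> tilde E v0 v1 ->
       X_tri X E (subst 0 v0 b0) (subst 0 v1 b1)).

(* environmental bisimilarity for programs: the largest bisimulation,
   i.e. the union of all of them *)
Definition approx_p_env (E : env) : Prop :=
  exists X, is_bisim_p X /\ X_env X E.
Definition approx_p (E : env) (t0 t1 : term) : Prop :=
  exists X, is_bisim_p X /\ X_tri X E t0 t1.

Definition omega_body : term := Lam (App (Var 0) (Var 0)).
Definition Omega : term := App omega_body omega_body.

(* Main.v *)
Require Import Defs.
From Stdlib Require Import Arith Relations Lia.

Definition redex (r : term) : Prop :=
  (exists b v, r = App (Lam b) v /\ is_value v) \/ (exists t, r = Reset t).

Lemma plugE_omega_not_lam : forall E b, plugE E Omega <> Lam b.
Proof. destruct E; simpl; discriminate. Qed.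
Lemma plugE_omega_not_reset : forall E b, plugE E Omega <> Reset b.
Proof. destruct E; simpl; discriminate. Qed.
Lemma plugE_shift_not_lam : forall E s b, plugE E (Shift s) <> Lam b.
Proof. destruct E; simpl; discriminate. Qed.
Lemma plugE_shift_not_reset : forall E s b, plugE E (Shift s) <> Reset b.
Proof. destruct E; simpl; discriminate. Qed.

Lemma plugF_redex_not_lam : forall F r b, redex r -> plugF F r <> Lam b.
Proof.
  destruct F; simpl; try discriminate.
  intros r b [[b0 [v [-> _]]]|[t0 ->]]; discriminate.
Qed.

Lemma dec_omega : forall F E r, redex r -> plugF F r = plugE E Omega ->
  F = embed E /\ r = Omega.
Proof.
  induction F; intros E r Hr H; simpl in *.
  - destruct E; simpl in *.
    + auto.
    + destruct Hr as [[b0 [v [-> Hv]]]|[t0 ->]]; try discriminate.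
      injection H; intros; subst; destruct E; simpl in Hv; contradiction.
    + destruct Hr as [[b0 [v [-> Hv]]]|[t0 ->]]; try discriminate.
      injection H; intros _ Ht. exfalso; eapply plugE_omega_not_lam; eauto.
  - destruct E; simpl in *.
    + injection H; intros H1 _. exfalso; eapply plugF_redex_not_lam; eauto.
    + injection H; intros H1 ->. destruct (IHF E r Hr H1) as [-> ->]; auto.
    + injection H; intros _ HH. exfalso; eapply plugE_omega_not_lam; eauto.
  - destruct E; simpl in *.
    + injection H; intros _ HH. exfalso; eapply plugF_redex_not_lam; eauto.
    + injection H; intros _ HH. exfalso; eapply plugF_redex_not_lam; eauto.
    + injection H; intros -> H1. destruct (IHF E r Hr H1) as [-> ->]; auto.
  - destruct E; simpl in *; discriminate.
Qed.

Lemma dec_shift : forall F E r s, redex r -> plugF F r = plugE E (Shift s) -> False.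
Proof.
  induction F; intros E r s Hr H; simpl in *.
  - destruct E; simpl in *.
    + destruct Hr as [[b0 [v [-> Hv]]]|[t0 ->]]; discriminate.
    + destruct Hr as [[b0 [v [-> Hv]]]|[t0 ->]]; try discriminate.
      injection H; intros; subst; destruct E; simpl in Hv; contradiction.
    + destruct Hr as [[b0 [v [-> Hv]]]|[t0 ->]]; try discriminate.
      injection H; intros _ Ht. eapply plugE_shift_not_lam; eauto.
  - destruct E; simpl in *; try discriminate.
    + injection H; intros H1 _. eauto.
    + injection H; intros _ H1. eapply plugE_shift_not_lam; eauto.
  - destruct E; simpl in *; try discriminate.
    + injection H; intros _ H1. eapply plugF_redex_not_lam; eauto.
    + injection H; intros _ H1. eauto.
  - destruct E; simpl in *; discriminate.
Qed.

Lemma plugE_shift_inj : forall E' E t s, plugE E' (Shift t) = plugE E (Shift s) -> t = s.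
Proof.
  induction E'; intros E t1 s H; destruct E; simpl in *; try discriminate.
  - congruence.
  - injection H; eauto.
  - injection H; intros _ HH. exfalso; eapply plugE_shift_not_lam; eauto.
  - injection H; intros _ HH. exfalso; eapply plugE_shift_not_lam; eauto.
  - injection H; eauto.
Qed.

Lemma shift_omega : forall E0 E t, plugE E0 (Shift t) <> plugE E Omega.
Proof.
  induction E0; intros E t1 H; destruct E; simpl in *; try discriminate;
    injection H; intros; subst;
    first [ solve [eapply IHE0; eauto]
          | solve [eapply plugE_shift_not_lam; eauto]
          | solve [eapply plugE_omega_not_lam; eauto]
          | solve [unfold Omega, omega_body in *; destruct E0; simpl in *; discriminate]
          | solve [unfold Omega, omega_body in *; destruct E; simpl in *; discriminate] ].
Qed.

Lemma plugF_embed : forall E t, plugF (embed E) t = plugE E t.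
Proof. induction E; simpl; intros; try rewrite IHE; auto. Qed.

Lemma step_omega : forall E q, step (Reset (plugE E Omega)) q -> q = Reset (plugE E Omega).
Proof.
  intros E q H. inversion H; subst.
  - destruct F; simpl in *; try discriminate.
    match goal with Heq : Reset _ = Reset _ |- _ => injection Heq; intro HH end.
    destruct (dec_omega F E (App (Lam b) v)) as [-> H2]; auto.
    + left; eauto.
    + unfold Omega, omega_body in H2. injection H2; intros -> ->.
      simpl. rewrite plugF_embed. reflexivity.
  - destruct F; simpl in *; try discriminate.
    + match goal with Heq : Reset _ = Reset _ |- _ => injection Heq; intro HH end. exfalso; eapply shift_omega; eauto.
    + match goal with Heq : Reset _ = Reset _ |- _ => injection Heq; intro HH end.
      destruct (dec_omega F E (Reset (plugE E0 (Shift t)))) as [_ H2]; eauto.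
      right; eauto. discriminate.
  - destruct F; simpl in *; try discriminate.
    + match goal with Heq : Reset _ = Reset _ |- _ => injection Heq; intro HH end. subst. destruct E; simpl in H1; contradiction.
    + match goal with Heq : Reset _ = Reset _ |- _ => injection Heq; intro HH end.
      destruct (dec_omega F E (Reset v)) as [_ H2]; eauto.
      right; eauto. discriminate.
Qed.

Lemma step_shift : forall E q, step (Reset (plugE E (Shift Omega))) q -> q = Reset Omega.
Proof.
  intros E q H. inversion H; subst.
  - destruct F; simpl in *; try discriminate.
    match goal with Heq : Reset _ = Reset _ |- _ => injection Heq; intro HH end. exfalso; eapply dec_shift; eauto. left; eauto.
  - destruct F; simpl in *; try discriminate.
    + match goal with Heq : Reset _ = Reset _ |- _ => injection Heq; intro HH end. apply plugE_shift_inj in HH. subst. reflexivity.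
    + match goal with Heq : Reset _ = Reset _ |- _ => injection Heq; intro HH end. exfalso; eapply dec_shift; eauto. right; eauto.
  - destruct F; simpl in *; try discriminate.
    + match goal with Heq : Reset _ = Reset _ |- _ => injection Heq; intro HH end. subst. destruct E; simpl in H1; contradiction.
    + match goal with Heq : Reset _ = Reset _ |- _ => injection Heq; intro HH end. exfalso; eapply dec_shift; eauto. right; eauto.
Qed.

Definition D (p : term) : Prop := forall q, steps p q -> is_program q /\ closed q.

Lemma D_omega : forall E, closed (Reset (plugE E Omega)) -> D (Reset (plugE E Omega)).
Proof.
  intros E Hc q Hs. apply clos_rt_rt1n in Hs.
  assert (Hg : forall x y, clos_refl_trans_1n term step x y ->
            x = Reset (plugE E Omega) -> y = x).
  { intros x y H0. induction H0; intros ->; auto.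
    apply step_omega in H. subst. rewrite IHclos_refl_trans_1n; auto. }
  rewrite (Hg _ _ Hs eq_refl). split; simpl; auto.
Qed.

Lemma closed_Omega : closed Omega.
Proof. unfold closed; simpl; lia. Qed.

Lemma closed_SOmega : closed (Shift Omega).
Proof. unfold closed; simpl; lia. Qed.

Lemma D_shift : forall E, closed (Reset (plugE E (Shift Omega))) ->
  D (Reset (plugE E (Shift Omega))).
Proof.
  intros E Hc q Hs. apply clos_rt_rt1n in Hs.
  inversion Hs; subst.
  - split; simpl; auto.
  - apply step_shift in H; subst.
    apply (D_omega EHole); [apply closed_Omega|]. apply clos_rt1n_rt; auto.
Qed.

Lemma closed_plug : forall R E0 E1 t0 t1, hat R (embed E0) (embed E1) ->
  closed t0 -> closed t1 -> closed (plugE E0 t0) /\ closed (plugE E1 t1).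
Proof.
  induction E0; intros E1 t0 t1 H H0 H1; destruct E1; simpl in *; inversion H; subst.
  - auto.
  - destruct (IHE0 E1 t0 t1); auto. match goal with Ht : tilde _ _ _ |- _ => destruct Ht as [_ [Ha Hb]] end.
    unfold closed in *; simpl; auto.
  - destruct (IHE0 E1 t0 t1); auto. match goal with Ht : tilde _ _ _ |- _ => destruct Ht as [_ [Ha Hb]] end.
    unfold closed in *; simpl; auto.
Qed.

Definition Xtri (E : env) (t0 t1 : term) : Prop :=
  E = env_empty /\ closed t0 /\ closed t1 /\
  ((t0 = Omega /\ t1 = Shift Omega) \/
   (is_program t0 /\ is_program t1 /\ D t0 /\ D t1)).

Definition X : envrel := {| X_env := fun _ => False; X_tri := Xtri |}.

Lemma D_step : forall p p', D p -> step p p' -> D p'.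
Proof.
  intros p p' H Hs q Hq. apply H. eapply rt_trans; [apply rt_step; eauto|auto].
Qed.

Lemma D_nonval : forall p v, D p -> step p v -> is_value v -> False.
Proof.
  intros p v H Hs Hv. destruct (H v (rt_step _ _ _ _ Hs)) as [Hp _].
  destruct v; simpl in *; auto.
Qed.

Theorem lemma18 : approx_p env_empty Omega (Shift Omega).
Proof.
  exists X. split.
  2:{ simpl. unfold Xtri. split; auto. split; [apply closed_Omega|].
      split; [apply closed_SOmega|]. auto. }
  unfold is_bisim_p; simpl. split; [intros; contradiction|].
  split.
  { intros E t0 t1 [-> [H0 [H1 _]]]. split; auto.
    intros a b []. }
  split.
  { intros E t0 t1 [-> [H0 [H1 [[-> ->]|[Hp0 [Hp1 _]]]]]] Hn E0 E1 Hh.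
    2:{ exfalso; auto. }
    destruct (closed_plug _ _ _ _ _ Hh closed_Omega closed_SOmega) as [C0 C1].
    unfold Xtri. split; auto.
    split; [exact C0|]. split; [exact C1|]. right.
    split; [simpl; auto|]. split; [simpl; auto|].
    split; [apply D_omega; exact C0| apply D_shift; exact C1]. }
  split.
  { intros E p0 p1 [-> [H0 [H1 [[-> ->]|[_ [_ [D0 D1]]]]]]] Hp0 Hp1.
    { simpl in Hp0; contradiction. }
    split; [|split; [|split]].
    - intros p0' Hs Hp'. exists p1. split; [apply rt_refl|]. split; [exact Hp1|].
      assert (H : D p0') by exact (D_step p0 p0' D0 Hs).
      exact (conj eq_refl (conj (proj2 (H p0' (rt_refl _ _ _))) (conj H1 (or_intror (conj Hp' (conj Hp1 (conj H D1))))))).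
    - intros v0 Hs Hv. exfalso; exact (D_nonval p0 v0 D0 Hs Hv).
    - intros p1' Hs Hp'. exists p0. split; [apply rt_refl|]. split; [exact Hp0|].
      assert (H : D p1') by exact (D_step p1 p1' D1 Hs).
      exact (conj eq_refl (conj H0 (conj (proj2 (H p1' (rt_refl _ _ _))) (or_intror (conj Hp0 (conj Hp' (conj D0 H))))))).
    - intros v1 Hs Hv. exfalso; exact (D_nonval p1 v1 D1 Hs Hv). }
  intros E [].
Qed.
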